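(* There exist absolute constants $c_0>0$ and $n_0$ such that for every $n\ge n_0$ for which $\sqrt n$ is an even integer, there exist a read-once DNF formula $f:\{0,1\}^n\to\{0,1\}$ and a probability vector $p\in(0,1)^n$ such that, under unit costs ($c_i=1$ for all $i$), $$\mathsf{OPT}_{\mathcal N}(f,c,p)\ge c_0\sqrt{n}\cdot \mathsf{OPT}_{\mathcal A}(f,c,p).$$
   Context: Stochastic Boolean Function Evaluation (SBFE) setup: $f:\{0,1\}^n\to\{0,1\}$ is a known Boolean function, $c\in\mathbb{R}_{>0}^n$ a cost vector and $p\in(0,1)^n$ a probability vector. The unknown input $x\in\{0,1\}^n$ is random with independent coordinates and $\Pr(x_i=1)=p_i$. The value $x_i$ can only be learned by testing variable $i$, at cost $c_i$. A strategy tests variables sequentially until $f(x)$ is determined, i.e. until $f(x')=f(x)$ for every $x'$ agreeing with $x$ on all tested coordinates. An adaptive strategy is a decision tree (the next test may depend on previous outcomes); a non-adaptive strategy is a fixed permutation of $[n]$, with variables tested in that order until $f(x)$ is determined. $\mathrm{cost}_{c,p}(f,S)$ is the expected total cost of tests performed by $S$ for random $x$. $\mathsf{OPT}_{\mathcal A}(f,c,p)$ (resp. $\mathsf{OPT}_{\mathcal N}(f,c,p)$) is the minimum of $\mathrm{cost}_{c,p}(f,S)$ over all adaptive (resp. non-adaptive) strategies. A DNF formula is a disjunction of terms, each a conjunction of literals; it is read-once if no variable is negated and distinct terms contain disjoint sets of variables. *)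

(* Defs.v *)
From HB Require Import structures.
From mathcomp Require Import all_boot all_order all_algebra all_fingroup.
From mathcomp Require Import boolp classical_sets reals Rstruct.
From Stdlib Require Rdefinitions.
Notation R := Rdefinitions.R.

Set Implicit Arguments. Unset Strict Implicit. Unset Printing Implicit Defensive.
Import Order.TTheory GRing.Theory Num.Theory.
Local Open Scope ring_scope.
Local Open Scope classical_set_scope.

Notation input n := {ffun 'I_n -> bool}.

Definition prob (n : nat) (p : 'I_n -> R) (x : input n) : R :=
  \prod_(i < n) (if x i then p i else 1 - p i).

Definition determined (n : nat) (f : input n -> bool) (S : {set 'I_n}) (x : input n)
  : bool :=
  [forall y : input n, [forall i in S, y i == x i] ==> (f y == f x)].

(* Adaptive strategies: decision trees; a node tests a variable and branches
   on its value. *)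
Inductive dtree (n : nat) : Type :=
| Leaf : dtree n
| Node : 'I_n -> dtree n -> dtree n -> dtree n.

Fixpoint tcost (n : nat) (f : input n -> bool) (c : 'I_n -> R) (T : dtree n)
  (S : {set 'I_n}) (x : input n) : R :=
  if determined f S x then 0 else
  match T with
  | Leaf => 0
  | Node i t0 t1 => c i + tcost f c (if x i then t1 else t0) (i |: S) x
  end.

Fixpoint tvalid (n : nat) (f : input n -> bool) (T : dtree n)
  (S : {set 'I_n}) (x : input n) : bool :=
  determined f S x ||
  match T with
  | Leaf => false
  | Node i t0 t1 => tvalid f (if x i then t1 else t0) (i |: S) x
  end.

Definition adaptive_strategy (n : nat) (f : input n -> bool) (T : dtree n) : Prop :=
  forall x : input n, tvalid f T (finset.set0) x.

Definition costA (n : nat) (f : input n -> bool) (c p : 'I_n -> R) (T : dtree n) : R :=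
  \sum_(x : input n) prob p x * tcost f c T (finset.set0) x.

(* Non-adaptive strategy given by a permutation s: the k-th test (k = 0..n-1)
   is of variable s k, and it is performed iff f(x) is not determined by
   the first k tests. *)
Definition ncost (n : nat) (f : input n -> bool) (c : 'I_n -> R) (s : 'S_n)
  (x : input n) : R :=
  \sum_(k < n)
     (if determined f (s @: [set j : 'I_n | (j < k)%N]) x then 0 else c (s k)).

Definition costN (n : nat) (f : input n -> bool) (c p : 'I_n -> R) (s : 'S_n) : R :=
  \sum_(x : input n) prob p x * ncost f c s x.

(* Optimal costs (minima, written as infima over the sets of strategy costs) *)
Definition OPT_A (n : nat) (f : input n -> bool) (c p : 'I_n -> R) : R :=
  inf [set costA f c p T | T in [set T | adaptive_strategy f T]].

Definition OPT_N (n : nat) (f : input n -> bool) (c p : 'I_n -> R) : R :=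
  inf [set costN f c p s | s in [set: 'S_n]].

(* A monotone DNF given as a list of terms, each term a list of variables
   (all literals positive). *)
Definition dnf_eval (n : nat) (F : seq (seq 'I_n)) (x : input n) : bool :=
  has (fun t => all (fun i => x i) t) F.

(* Read-once DNF formula: at least one term, every term a nonempty
   conjunction, no variable occurring twice (in particular distinct terms
   have disjoint variable sets). *)
Definition read_once_dnf (n : nat) (F : seq (seq 'I_n)) : Prop :=
  F != [::] /\ all (fun t => t != [::]) F /\ uniq (flatten F).

(* Main.v *)
Require Import Defs.
From HB Require Import structures.
From mathcomp Require Import all_boot all_order all_algebra all_fingroup.
From mathcomp Require Import boolp classical_sets reals Rstruct.
From mathcomp Require Import zify ring lra.
Import Order.TTheory GRing.Theory Num.Theory.
Set Implicit Arguments. Unset Strict Implicit. Unset Printing Implicit Defensive.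
Local Open Scope ring_scope.

Lemma E_prod n (p : 'I_n -> R) (h : 'I_n -> bool -> R) :
  \sum_(x : input n) prob p x * \prod_i h i (x i) =
  \prod_i (p i * h i true + (1 - p i) * h i false).
Proof.
transitivity (\prod_i \sum_(b : bool) (if b then p i else 1 - p i) * h i b).
  rewrite bigA_distr_bigA /=; apply: eq_bigr => x _.
  by rewrite /prob -big_split.
by apply: eq_bigr => i _; rewrite big_bool.
Qed.
Lemma prob_ge0 n (p : 'I_n -> R) x : (forall i, 0 < p i < 1) -> 0 <= prob p x.
Proof.
move=> hp; apply: prodr_ge0 => i _; case: (x i); have /andP[h1 h2] := hp i; lra.
Qed.
Lemma bernoulli (x : R) k : 0 <= x <= 1 -> 1 - k%:R * x <= (1 - x) ^+ k.
Proof.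
move=> /andP[h0 h1]; elim: k => [|k IH]; first by rewrite expr0 mul0r subr0.
rewrite exprS.
have hk : 0 <= (1 - x) ^+ k by apply: exprn_ge0; lra.
have hx : 0 <= k%:R * x by apply: mulr_ge0 => //; exact: ler0n.
rewrite -natr1 mulrDl mul1r.
nra.
Qed.

Lemma E_if n (p : 'I_n -> R) i (A B : R) :
  \sum_(x : input n) prob p x * (if x i then A else B) = p i * A + (1 - p i) * B.
Proof.
have := E_prod p (fun k b => if k == i then (if b then A else B) else 1).
have -> : \prod_(k < n) (p k * (if k == i then A else 1) + (1 - p k) * (if k == i then B else 1))
  = p i * A + (1 - p i) * B.
  rewrite (bigD1 i) //= eqxx big1 ?mulr1 // => k; case: (k =P i) => // _ _; ring.
move=> <-; apply: eq_bigr => x _; congr (_ * _).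
rewrite (bigD1 i) //= eqxx big1 ?mulr1 // => k; case: (k =P i) => //.
Qed.

Section Constr.
Variable m' : nat.
Local Notation M := m'.+1.
Local Notation N := (m'.+1 * m'.+1)%N.

Lemma e_lt (j t : 'I_M) : (j * M + t < N)%N.
Proof. have := ltn_ord j; have := ltn_ord t; nia. Qed.

Definition e (jt : 'I_M * 'I_M) : 'I_N := Ordinal (e_lt jt.1 jt.2).

Lemma div_lt (i : 'I_N) : (i %/ M < M)%N.
Proof. by rewrite ltn_divLR. Qed.
Lemma mod_lt (i : 'I_N) : (i %% M < M)%N.
Proof. by rewrite ltn_pmod. Qed.

Definition dec (i : 'I_N) : 'I_M * 'I_M := (Ordinal (div_lt i), Ordinal (mod_lt i)).

Lemma eK : cancel e dec.
Proof.
move=> [j t]; rewrite /dec /e; congr (_, _); apply: val_inj => /=.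
  by rewrite divnMDl // divn_small ?addn0.
by rewrite modnMDl modn_small.
Qed.

Lemma decK : cancel dec e.
Proof. by move=> i; apply: val_inj => /=; rewrite -divn_eq. Qed.

Lemma e_inj : injective e. Proof. exact: can_inj eK. Qed.

Definition F : seq (seq 'I_N) :=
  [seq [seq e (j, t) | t <- enum 'I_M] | j <- enum 'I_M].

Definition f := dnf_eval F.

Lemma fE (x : input N) : f x = [exists j, [forall t, x (e (j, t))]].
Proof.
rewrite /f /dnf_eval /F has_map.
apply/hasP/existsP => [[j _ /= /allP H]|[j /forallP H]].
  by exists j; apply/forallP => t; apply: H; apply: map_f; rewrite mem_enum.
exists j; first by rewrite mem_enum.
by apply/allP => /= k /mapP [t _ ->]; apply: H.
Qed.

Lemma F_ro : read_once_dnf F.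
Proof.
split; first by rewrite /F; case E: (enum 'I_M) => [|a s] //; have := mem_enum 'I_M ord0; rewrite E.
split.
  apply/allP => /= s /mapP [j _ ->]; rewrite /=.
  by case E: (enum 'I_M) => [|a s'] //; have := mem_enum 'I_M ord0; rewrite E.
rewrite /F; apply: allpairs_uniq; try exact: enum_uniq.
by move=> [j t] [j' t'] _ _ /= /e_inj.
Qed.

Lemma detP (S : {set 'I_N}) (x : input N) :
  reflect (forall y : input N, (forall i, i \in S -> y i = x i) -> f y = f x)
          (determined f S x).
Proof.
apply: (iffP forallP) => [H y Hy|H y].
  by have /implyP/(_ _)/eqP := H y; apply; apply/forallP => i; apply/implyP => /Hy ->.
apply/implyP => /forallP Hy; apply/eqP; apply: H => i hi.
by have /implyP/(_ hi)/eqP := Hy i.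
Qed.

Lemma D1 (S : {set 'I_N}) (x : input N) j :
  (forall t, e (j, t) \in S /\ x (e (j, t))) -> determined f S x.
Proof.
move=> H; apply/detP => y Hy.
have fx : f x by rewrite fE; apply/existsP; exists j; apply/forallP => t; case: (H t).
rewrite fx fE; apply/existsP; exists j; apply/forallP => t.
by case: (H t) => h1 h2; rewrite Hy.
Qed.

Lemma D0 (S : {set 'I_N}) (x : input N) :
  (forall j, exists t, e (j, t) \in S /\ ~~ x (e (j, t))) -> determined f S x.
Proof.
move=> H.
have nf : forall y : input N, (forall i, i \in S -> y i = x i) -> f y = false.
  move=> y Hy; apply/negbTE; rewrite fE negb_exists; apply/forallP => j.
  rewrite negb_forall; apply/existsP; case: (H j) => t [h1 h2]; exists t.
  by rewrite Hy.
by apply/detP => y Hy; rewrite (nf y Hy) (nf x).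
Qed.

Fixpoint tt (j : 'I_M) (u : nat) (rest : dtree N) : dtree N :=
  match u with
  | 0 => Leaf N
  | u'.+1 => Node (e (j, inord (M - u'.+1))) rest (tt j u' rest)
  end.

Fixpoint atree (r : nat) : dtree N :=
  match r with
  | 0 => Leaf N
  | r'.+1 => tt (inord r') M (atree r')
  end.

Lemma tt_valid j u rest (S : {set 'I_N}) (x : input N) :
  (u <= M)%N ->
  (forall t : 'I_M, (t < M - u)%N -> e (j, t) \in S /\ x (e (j, t))) ->
  (forall S' : {set 'I_N}, S \subset S' -> (exists t, e (j, t) \in S' /\ ~~ x (e (j, t))) ->
      tvalid f rest S' x) ->
  tvalid f (tt j u rest) S x.
Proof.
elim: u S => [|u IH] S hu H1 H2.
  by rewrite /= (@D1 S x j) // => t; apply: H1; rewrite subn0.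
rewrite /=; apply/orP; right.
set i := e (j, inord (M - u.+1)).
have hiS : (S \subset i |: S)%SET by apply/fintype.subsetP => k hk; rewrite in_setU1 hk orbT.
case hx: (x i).
  apply: IH; first by apply: ltnW.
    move=> t ht; case: (ltnP t (M - u.+1)) => h.
      by case: (H1 t h) => a b; split => //; apply: (fintype.subsetP hiS).
    have -> : t = inord (M - u.+1).
      by apply: val_inj; rewrite /= inordK; [lia | lia].
    by rewrite setU11.
  by move=> S' hS'; apply: H2; apply: fintype.subset_trans hS'.
apply: H2 => //; exists (inord (M - u.+1)); by rewrite setU11 hx.
Qed.

Lemma atree_valid r (S : {set 'I_N}) (x : input N) :
  (r <= M)%N ->
  (forall j : 'I_M, (r <= j)%N -> exists t, e (j, t) \in S /\ ~~ x (e (j, t))) ->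
  tvalid f (atree r) S x.
Proof.
elim: r S => [|r IH] S hr H.
  by rewrite /= D0 // => j; apply: H.
change (tvalid f (tt (inord r) M (atree r)) S x); apply: tt_valid => //.
  by move=> t; rewrite subnn.
move=> S' hS' [t ht]; apply: IH; first by apply: ltnW.
move=> j hj; case: (ltnP r j) => h.
  by case: (H j h) => t' [a b]; exists t'; split => //; apply: (fintype.subsetP hS').
have -> : j = inord r by apply: val_inj; rewrite /= inordK; lia.
by exists t.
Qed.

Lemma atree_strategy : adaptive_strategy f (atree M).
Proof. by move=> x; apply: atree_valid => // j; rewrite leqNgt ltn_ord. Qed.

Definition c1 : 'I_N -> R := fun _ => 1.

Fixpoint pcost (x : input N) (T : dtree N) : R :=
  match T with
  | Leaf => 0
  | Node i t0 t1 => 1 + pcost x (if x i then t1 else t0)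
  end.

Lemma pcost_ge0 x T : 0 <= pcost x T.
Proof. elim: T => [|i t0 IH0 t1 IH1] //=; case: (x i); [have := IH1|have := IH0]; lra. Qed.

Lemma tcost_le x T S : tcost f c1 T S x <= pcost x T.
Proof.
elim: T S => [|i t0 IH0 t1 IH1] S /=; case: (determined f S x) => //=.
all: try (rewrite /c1; case: (x i); [have := IH1 (i |: S)|have := IH0 (i |: S)]);
  try (have := pcost_ge0 x t0; have := pcost_ge0 x t1); try lra.
Qed.

Lemma tcost_ge0 x T S : 0 <= tcost f c1 T S x.
Proof.
elim: T S => [|i t0 IH0 t1 IH1] S /=; case: (determined f S x) => //.
rewrite /c1; case: (x i); [have := IH1 (i |: S)|have := IH0 (i |: S)]; lra.
Qed.

Lemma pcost_tt x j u rest : pcost x (tt j u rest) <= u%:R + pcost x rest.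
Proof.
elim: u => [|u IH] /=; first by rewrite add0r pcost_ge0.
rewrite -natr1; case: (x _); [have := IH | have := pcost_ge0 x rest]; 
  have := ler0n R u; lra.
Qed.

Definition g (x : input N) (j : 'I_M) : R := if x (e (j, ord0)) then M%:R else 1.

Lemma pcost_ttM x j rest : pcost x (tt j M rest) <= g x j + pcost x rest.
Proof.
rewrite /= /g subnn.
have -> : (inord 0 : 'I_M) = ord0 by apply: val_inj; rewrite /= inordK.
case: (x _); last lra.
have := pcost_tt x j m' rest; rewrite -natr1 /=; lra.
Qed.

Lemma pcost_atree x r : pcost x (atree r) <= \sum_(j < r) g x (inord j).
Proof.
elim: r => [|r IH]; first by rewrite big_ord0.
have -> : \sum_(j < r.+1) g x (inord j) = \sum_(j < r) g x (inord j) + g x (inord r) by rewrite big_ord_recr.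
have := pcost_ttM x (inord r) (atree r).
change (pcost x (atree r.+1)) with (pcost x (tt (inord r) M (atree r))).
lra.
Qed.

Definition q : R := (2 * M%:R)^-1.
Definition pp (i : 'I_N) : R := if (dec i).2 == ord0 then q else 1 - q.

Lemma qM : q * M%:R = 1/2.
Proof. rewrite /q; field; apply/eqP; have := ler0n R m'; lra. Qed.

Lemma q_range : 0 < q <= 1/2.
Proof.
have hM : 1 <= M%:R :> R by rewrite ler1n.
have q0 : 0 < q by rewrite /q invr_gt0; lra.
apply/andP; split => //; have := qM; nra.
Qed.

Lemma pp_range i : 0 < pp i < 1.
Proof. have := q_range; rewrite /pp; case: ifP => _ /andP[a b]; apply/andP; lra. Qed.



Lemma costA_le : costA f c1 pp (atree M) <= 3/2 * M%:R.
Proof.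
rewrite /costA.
apply: le_trans (_ : \sum_(x : input N) prob pp x * \sum_(j < M) g x (inord j) <= _).
  apply: ler_sum => x _; apply: ler_wpM2l; first exact: prob_ge0 pp_range.
  exact: le_trans (tcost_le _ _ _) (pcost_atree _ _).
under eq_bigr do rewrite mulr_sumr.
rewrite exchange_big /=.
apply: le_trans (_ : \sum_(j < M) (3/2 : R) <= _); last by rewrite sumr_const card_ord mulr_natr.
apply: ler_sum => j _.
rewrite /g E_if /pp eK eqxx.
have := qM; have := q_range; lra.
Qed.

Definition hb (j : 'I_M) (k : 'I_N) (b : bool) : bool :=
  if (dec k).1 == j then b else if (dec k).2 == ord0 then ~~ b else true.

Definition Eb (j : 'I_M) (x : input N) : bool := [forall k, hb j k (x k)].

Lemma Eb_term j (x : input N) t : Eb j x -> x (e (j, t)).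
Proof. by move=> /forallP /(_ (e (j, t))); rewrite /hb eK eqxx. Qed.

Lemma Eb_other j j' (x : input N) : Eb j x -> j' != j -> ~~ x (e (j', ord0)).
Proof.
move=> /forallP /(_ (e (j', ord0))) + hne; rewrite /hb eK /= (negbTE hne) ?eqxx.
by [].
Qed.

Lemma Eb_uniq j j' (x : input N) : Eb j x -> Eb j' x -> j' = j.
Proof.
move=> h1 h2; apply/eqP; apply/negPn/negP => hne.
by have := Eb_other h1 hne; rewrite (Eb_term ord0 h2).
Qed.

Lemma ND j t (x : input N) (S : {set 'I_N}) :
  Eb j x -> e (j, t) \notin S -> ~~ determined f S x.
Proof.
move=> hE hS; apply/negP => /detP H.
set y : input N := [ffun k => if k == e (j, t) then false else x k].
have fx : f x by rewrite fE; apply/existsP; exists j; apply/forallP => t'; apply: Eb_term.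
have fy : ~~ f y.
  rewrite fE negb_exists; apply/forallP => j'; rewrite negb_forall; apply/existsP.
  case: (j' =P j) => [->|hne].
    by exists t; rewrite /y ffunE eqxx.
  exists ord0; rewrite /y ffunE.
  case: (e (j', ord0) =P e (j, t)) => [/e_inj [] /hne //|_].
  by apply: Eb_other hE _; apply/eqP.
have := H y; rewrite fx (negbTE fy) => /(_ _) h; suff : false = true by [].
apply: h => i hi; rewrite /y ffunE; case: (i =P e (j, t)) => // hie.
by move: hS; rewrite -hie hi.
Qed.

Lemma ncost_ge0 (s : 'S_N) (x : input N) : 0 <= ncost f c1 s x.
Proof. by apply: sumr_ge0 => k _; case: ifP => //; rewrite /c1. Qed.

Lemma ncost_ge (s : 'S_N) (x : input N) j t :
  Eb j x -> ((val ((s^-1)%g (e (j, t)))).+1)%:R <= ncost f c1 s x.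
Proof.
move=> hE.
set P := val ((s^-1)%g (e (j, t))).
have hP : (P < N)%N by rewrite ltn_ord.
have -> : ncost f c1 s x = \sum_(0 <= k < N) (fun k : nat => if determined f (s @: [set j0 : 'I_N | (j0 < k)%N]%classic) x then (0:R) else 1) k by rewrite big_mkord.
rewrite (big_cat_nat _ (n := P.+1)) //=.
rewrite (eq_big_nat _ _ (F2 := fun _ => 1)); last first.
  move=> k /andP[_ hk]; rewrite (negbTE (@ND j t x _ hE _)) //.
  rewrite -[e (j, t)](permKV s) mem_imset; last exact: perm_inj.
  apply/negP; rewrite in_setE /= -/P; lia.
rewrite sumr_const_nat subn0 lerDl.
by apply: sumr_ge0 => k _; case: ifP.
Qed.

Definition W (s : 'S_N) (j : 'I_M) : R :=
  \sum_(t < M) ((val ((s^-1)%g (e (j, t)))).+1)%:R.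

Lemma ncostM (s : 'S_N) (x : input N) :
  \sum_(j < M) (Eb j x)%:R * W s j <= M%:R * ncost f c1 s x.
Proof.
case: (pickP (fun j => Eb j x)) => [j0 hj0|H]; last first.
  rewrite big1; last by move=> j _; rewrite H mul0r.
  by apply: mulr_ge0 => //; apply: ncost_ge0.
rewrite (bigD1 j0) //= big1 ?addr0; last first.
  move=> j hj; case hE: (Eb j x); last by rewrite mul0r.
  by move: hj; rewrite (Eb_uniq hj0 hE) eqxx.
rewrite hj0 mul1r /W.
apply: le_trans (_ : \sum_(t < M) ncost f c1 s x <= _).
  by apply: ler_sum => t _; apply: ncost_ge.
by rewrite sumr_const card_ord mulr_natl.
Qed.

Lemma forall_prod (T : finType) (P : pred T) :
  ([forall k, P k])%:R = \prod_k (P k)%:R :> R.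
Proof.
case: (boolP [forall k, P k]) => [/forallP H|H].
  by rewrite big1 // => k _; rewrite H.
have [k hk] : exists k, ~~ P k by apply/existsP; rewrite -negb_forall.
by rewrite (bigD1 k) //= (negbTE hk) mul0r.
Qed.

Lemma e_bij : bijective e.
Proof. by exists dec; [exact: eK | exact: decK]. Qed.

Lemma prod_pairs (G : 'I_N -> R) :
  \prod_k G k = \prod_(j' < M) \prod_(t < M) G (e (j', t)).
Proof.
rewrite pair_bigA (reindex e) /=; last exact: onW_bij e_bij.
by apply: eq_bigr => [[a b]].
Qed.

Lemma sum_pairs (G : 'I_N -> R) :
  \sum_k G k = \sum_(j' < M) \sum_(t < M) G (e (j', t)).
Proof.
rewrite pair_bigA (reindex e) /=; last exact: onW_bij e_bij.
by apply: eq_bigr => [[a b]].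
Qed.

Lemma prod_first (A B : R) :
  \prod_(t < M) (if t == ord0 then A else B) = A * B ^+ m'.
Proof.
rewrite big_ord_recl eqxx; congr (_ * _).
rewrite (eq_bigr (fun _ => B)); last by [].
by rewrite prodr_const card_ord.
Qed.

Lemma PrE j :
  \sum_(x : input N) prob pp x * (Eb j x)%:R = q * (1 - q) ^+ m' * (1 - q) ^+ m'.
Proof.
under eq_bigr do rewrite /Eb forall_prod.
rewrite (E_prod pp (fun k b => (hb j k b)%:R)) prod_pairs.
rewrite (eq_bigr (fun j' => if j' == j then q * (1 - q) ^+ m' else 1 - q)); last first.
  move=> j' _; rewrite /hb /pp.
  under eq_bigr do rewrite eK /=.
  case: (boolP (j' == j)) => hne.
    move/eqP: hne => hne; subst j'.
    rewrite -prod_first; apply: eq_bigr => t _ /=; rewrite ?eqxx /=.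
    by case: (t == ord0) => /=; rewrite ?mulr1 ?mulr0 ?addr0.
  transitivity (\prod_(t < M) (if t == ord0 then 1 - q else 1)); last first.
    by rewrite prod_first expr1n mulr1.
  apply: eq_bigr => t _ /=; move: hne; case: (j' == j) => // _.
  case: (t == ord0) => /=; rewrite ?mulr1 ?mulr0 ?add0r //.
  by rewrite addrC subrK.
rewrite (bigD1 j) //= eqxx; congr (_ * _).
rewrite (eq_bigr (fun _ => 1 - q)); last by move=> i /negbTE ->.
by rewrite prodr_const cardC1 card_ord.
Qed.

Lemma sumW (s : 'S_N) : \sum_(j < M) W s j = \sum_(k < N) ((val k).+1)%:R.
Proof.
rewrite /W -(sum_pairs (fun k => ((val ((s^-1)%g k)).+1)%:R)).
by rewrite [RHS](reindex_inj (@perm_inj _ (s^-1)%g)).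
Qed.

Lemma costN_ge (s : 'S_N) : M%:R ^+ 2 / 16 <= costN f c1 pp s.
Proof.
set y : R := M%:R.
have y0 : 0 < y by rewrite /y ltr0n.
set a := (1 - q) ^+ m'.
have ha : 1/2 <= a.
  have /andP[hq0 hq1] := q_range.
  have hb : 1 - m'%:R * q <= a by apply: bernoulli; apply/andP; lra.
  have hm : m'%:R * q <= 1/2.
    rewrite -qM [X in _ <= X]mulrC; apply: ler_wpM2r; first lra.
    by rewrite ler_nat.
  lra.
set pi := q * a * a.
have hpi : q / 4 <= pi.
  have /andP[hq0 _] := q_range.
  have haa : 1/4 <= a * a by nra.
  rewrite /pi -mulrA; have -> : q / 4 = q * (1/4) by field.
  by apply: ler_wpM2l => //; lra.
have h1 : y * costN f c1 pp s = \sum_(x : input N) prob pp x * (y * ncost f c1 s x).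
  by rewrite /costN mulr_sumr; apply: eq_bigr => x _; rewrite mulrCA.
have h2 : \sum_(x : input N) prob pp x * \sum_(j < M) (Eb j x)%:R * W s j
          <= \sum_(x : input N) prob pp x * (y * ncost f c1 s x).
  apply: ler_sum => x _; apply: ler_wpM2l; first exact: prob_ge0 pp_range.
  exact: ncostM.
have h3 : \sum_(x : input N) prob pp x * \sum_(j < M) (Eb j x)%:R * W s j
          = pi * \sum_(k < N) ((val k).+1)%:R.
  rewrite -(sumW s) mulr_sumr.
  under eq_bigr do rewrite mulr_sumr.
  rewrite exchange_big /=; apply: eq_bigr => j _.
  rewrite /pi /a -(PrE j) mulr_suml; apply: eq_bigr => x _; by rewrite mulrA.
set T := \sum_(k < N) ((val k).+1)%:R in h3.
have hT : y ^+ 4 / 2 <= T.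
  have : 2 * T = (N * N.+1)%:R.
    rewrite /T -natr_sum -natrM; congr (_%:R).
    elim: (N) => [|n IH]; first by rewrite big_ord0.
    rewrite big_ord_recr /= mulnDr IH; lia.
  have hN : (N.+1)%:R = y * y + 1 :> R by rewrite -natr1 natrM.
  rewrite natrM hN natrM -/y => hT2.
  have -> : y ^+ 4 = (y * y) * (y * y) by ring.
  have hyy : 0 <= y * y by nra.
  move: hT2 hyy; set z := y * y => hT2 hyy.
  have -> : z * z / 2 = T - z / 2 by rewrite mulrDr mulr1 in hT2; lra.
  lra.
have hq := qM; rewrite -/y in hq.
have key : y * (y ^+ 2 / 16) <= y * costN f c1 pp s.
  rewrite h1; apply: le_trans h2; rewrite h3.
  have : q / 4 * (y ^+ 4 / 2) <= pi * T.
    apply: ler_pM => //; first by have := q_range; lra.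
    by apply: divr_ge0 => //; apply: exprn_ge0; lra.
  suff -> : q / 4 * (y ^+ 4 / 2) = y * (y ^+ 2 / 16) by [].
  have -> : q / 4 * (y ^+ 4 / 2) = (q * y) * y ^+ 3 / 8 by field.
  rewrite hq; field.
  by [].
by rewrite ler_pM2l in key.
Qed.
End Constr.

Lemma costA_ge0 m' T : 0 <= costA (@f m') (@c1 m') (@pp m') T.
Proof.
apply: sumr_ge0 => x _; apply: mulr_ge0; first exact: prob_ge0 (@pp_range m').
exact: tcost_ge0.
Qed.

Lemma OPT_A_le m' : OPT_A (@f m') (@c1 m') (@pp m') <= 3/2 * (m'.+1)%:R.
Proof.
apply: le_trans (@costA_le m').
have hl : has_lbound [set costA (@f m') (@c1 m') (@pp m') T | T in [set T | adaptive_strategy (@f m') T]].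
  by exists 0 => z [T _ <-]; apply: costA_ge0.
apply: (ge_inf hl); exists (@atree m' m'.+1) => //; exact: atree_strategy.
Qed.

Lemma OPT_N_ge m' : (m'.+1)%:R ^+ 2 / 16 <= OPT_N (@f m') (@c1 m') (@pp m').
Proof.
apply: lb_le_inf.
  by exists (costN (@f m') (@c1 m') (@pp m') 1%g); exists 1%g.
by move=> z [s _ <-]; apply: costN_ge.
Qed.

Theorem theorem4 :
  exists (c0 : R) (n0 : nat), 0 < c0 /\
    forall n : nat, (n0 <= n)%N -> (exists k : nat, n = ((2 * k) ^ 2)%N) ->
      exists (F : seq (seq 'I_n)) (p : 'I_n -> R),
        read_once_dnf F /\ (forall i, 0 < p i < 1) /\
        c0 * Num.sqrt (n%:R) * OPT_A (dnf_eval F) (fun _ => 1) p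
          <= OPT_N (dnf_eval F) (fun _ => 1) p.
Proof.
exists (1/24), 1%N; split; first lra.
move=> n hn [k hk].
have hn' : n = ((2 * k).-1.+1 * (2 * k).-1.+1)%N.
  rewrite hk; have : (0 < 2 * k)%N by rewrite hk in hn; case: k hk hn => //.
  by move=> /prednK ->; rewrite expnS expn1.
clear hk; move: (2 * k).-1 hn' => m' hm; subst n.
exists (@F m'), (@pp m'); split; first exact: F_ro.
split; first exact: pp_range.
change (1 / 24 * Num.sqrt (m'.+1 * m'.+1)%:R * OPT_A (@f m') (@c1 m') (@pp m')
  <= OPT_N (@f m') (@c1 m') (@pp m')).
set y : R := (m'.+1)%:R.
have y0 : 0 < y by rewrite /y ltr0n.
have -> : Num.sqrt (m'.+1 * m'.+1)%:R = y.
  by rewrite natrM -/y -expr2 sqrtr_sqr ger0_norm // ltW.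
apply: le_trans (OPT_N_ge m').
apply: le_trans (_ : 1/24 * y * (3/2 * y) <= _).
  by apply: ler_wpM2l; [apply: mulr_ge0 => //; lra | apply: OPT_A_le].
by rewrite -/y; lra.
Qed.
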